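(* In a network satisfying (H1) and (H2) containing the two connected components $Y+S_0\rightleftarrows U_1\to\cdots\rightleftarrows U_L\to Y+S_L$ and $\widetilde Y+S_L\rightleftarrows V_L\to\widetilde Y+S_{L-1}\rightleftarrows\cdots\rightleftarrows V_1\to\widetilde Y+S_0$ ($L\ge1$), with rate constants as in the context and $\tilde K_j:=\tilde b_j+\tilde c_j$, the constants $\tilde a_L,\tilde b_L,\tilde c_L$ and, for $1\le j\le L-1$, the quantities $\tilde a_j$ and $\tilde K_j$ are identifiable from $s_L$ using $\dot s_L$ and $\ddot s_L$.
   Context: Species are capital letters, concentrations lower-case letters. Mass-action system: $\dot{\mathbf{x}}=\sum_{y\to y'}k_{yy'}\mathbf{x}^y(y'-y)$, rates $k_{yy'}>0$ (vector $\mathbf{k}$). Total derivative: $\dot\varphi=\sum_i\frac{\partial\varphi}{\partial x_i}\dot x_i$ with $\dot x_i$ replaced by the right-hand side; $\varphi^{(\ell)}$ its $\ell$-th iterate. A map $\psi$ of $\mathbf{k}$ is identifiable from $x$ using orders $1\le\ell\le D$ if for positive $\mathbf{k}^*,\mathbf{k}^{**}$, $x^{(\ell)}(\mathbf{x},\mathbf{k}^* )=x^{(\ell)}(\mathbf{x},\mathbf{k}^{**})$ as polynomials in $\mathbf{x}$ for all $1\le\ell\le D$ implies $\psi(\mathbf{k}^* )=\psi(\mathbf{k}^{**})$. (H1) Every connected component has the form $Y+S_0\rightleftarrows U_1\to\cdots\rightleftarrows U_L\to Y+S_L$ (reactions $Y+S_{j-1}\to U_j$, $U_j\to Y+S_{j-1}$,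 $U_j\to Y+S_j$), unique enzyme; intermediates distinct throughout the network; non-intermediates of a component pairwise distinct but may appear in other components; each complex in a unique component. $\mathscr{S}_U$ = substrates/products of the component of intermediate $U$. (H2) A partition $\mathscr{S}^{(0)}\sqcup\cdots\sqcup\mathscr{S}^{(M)}$ ($M\ge2$, nonempty, $\mathscr{S}^{(0)}$ the intermediates) with: for each intermediate $U$ with enzyme $Y$, some $\alpha\ge1$ has $\mathscr{S}_U\subseteq\mathscr{S}^{(\alpha)}$, $Y\notin\mathscr{S}^{(\alpha)}$. Rates: first component $Y+S_{j-1}\to U_j$: $a_j$; $U_j\to Y+S_{j-1}$: $b_j$; $U_j\to Y+S_j$: $c_j$. Second component: $\widetilde Y+S_j\to V_j$: $\tilde a_j$; $V_j\to\widetilde Y+S_j$: $\tilde b_j$; $V_j\to\widetilde Y+S_{j-1}$: $\tilde c_j$ ($1\le j\le L$). *)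

(* Defs.v *)
From HB Require Import structures.
From mathcomp Require Import all_boot all_order all_algebra.
Set Implicit Arguments. Unset Strict Implicit. Unset Printing Implicit Defensive.
Import Order.TTheory GRing.Theory Num.Theory.
Local Open Scope ring_scope.

(* A monomial x^y is its exponent vector y : S -> nat (also used for complexes). *)
Definition mono (S : finType) := {ffun S -> nat}.

(* A polynomial is a finite list of terms (coefficient, monomial);
   repeated monomials are allowed, coefficients are summed. *)
Definition mpoly (R : nzRingType) (S : finType) := seq (R * mono S).

Definition mcoef (R : nzRingType) (S : finType) (p : mpoly R S) (m : mono S) : R :=
  \sum_(t <- p | t.2 == m) t.1.

Definition mpoly_eq (R : nzRingType) (S : finType) (p q : mpoly R S) : Prop :=
  forall m : mono S, mcoef p m = mcoef q m.

Definition mvar (R : nzRingType) (S : finType) (s : S) : mpoly R S :=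
  [:: (1, [ffun z => nat_of_bool (z == s)] : mono S)].

Definition mmul (R : nzRingType) (S : finType) (p q : mpoly R S) : mpoly R S :=
  [seq (t.1 * u.1, [ffun z => (t.2 z + u.2 z)%N] : mono S) | t : R * mono S <- p, u : R * mono S <- q].

Definition mderiv (R : nzRingType) (S : finType) (i : S) (p : mpoly R S) : mpoly R S :=
  [seq (t.1 * (t.2 i)%:R, [ffun z => if z == i then (t.2 z).-1 else t.2 z] : mono S) | t : R * mono S <- p].

Definition tdot (R : nzRingType) (S : finType) (f : S -> mpoly R S) (p : mpoly R S)
  : mpoly R S :=
  flatten [seq mmul (mderiv i p) (f i) | i <- enum S].

Definition iter_dot (R : nzRingType) (S : finType) (f : S -> mpoly R S) (l : nat) (s : S)
  : mpoly R S := iter l (tdot f) (mvar R s).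

(* Mass-action right-hand side: reactions are (rate, reactant y, product y'),
   x_s' = sum k x^y (y'_s - y_s). *)
Definition mass_action (R : nzRingType) (S : finType) (rxns : seq (R * mono S * mono S))
  (s : S) : mpoly R S :=
  [seq (r.1.1 * ((r.2 s)%:R - (r.1.2 s)%:R), r.1.2) | r : R * mono S * mono S <- rxns].

Record rcomp (S : finType) := Comp {
  cL : nat;
  cY : S;
  cS : nat -> S;     (* substrates/products S_0 .. S_L *)
  cU : nat -> S      (* intermediates U_1 .. U_L *)
}.

Definition cplxYS (S : finType) (Y s : S) : mono S :=
  [ffun z => (nat_of_bool (z == Y) + nat_of_bool (z == s))%N].
Definition cplx1 (S : finType) (U : S) : mono S := [ffun z => nat_of_bool (z == U)].

(* Rate vector k: for component c and 1 <= j <= L_c,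
   ka c j : Y+S_{j-1} -> U_j,  kb c j : U_j -> Y+S_{j-1},  kc c j : U_j -> Y+S_j. *)
Definition rates (R : Type) (n : nat) :=
  (('I_n -> nat -> R) * ('I_n -> nat -> R) * ('I_n -> nat -> R))%type.

Definition network_reactions (R : nzRingType) (S : finType) (n : nat)
  (comps : 'I_n -> rcomp S) (k : rates R n) : seq (R * mono S * mono S) :=
  let: (ka, kb, kc) := k in
  flatten [seq
    flatten [seq
      [:: (ka c j, cplxYS (cY (comps c)) (cS (comps c) j.-1), cplx1 (cU (comps c) j));
          (kb c j, cplx1 (cU (comps c) j), cplxYS (cY (comps c)) (cS (comps c) j.-1));
          (kc c j, cplx1 (cU (comps c) j), cplxYS (cY (comps c)) (cS (comps c) j))]
      | j <- iota 1 (cL (comps c))]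
    | c <- enum 'I_n].

Definition rhs (R : nzRingType) (S : finType) (n : nat) (comps : 'I_n -> rcomp S)
  (k : rates R n) : S -> mpoly R S :=
  mass_action (network_reactions comps k).

Definition positive_rates (R : numDomainType) (S : finType) (n : nat)
  (comps : 'I_n -> rcomp S) (k : rates R n) : Prop :=
  let: (ka, kb, kc) := k in
  forall c j, (1 <= j <= cL (comps c))%N -> 0 < ka c j /\ 0 < kb c j /\ 0 < kc c j.

Definition is_intermediate (S : finType) (n : nat) (comps : 'I_n -> rcomp S) (s : S) : Prop :=
  exists c j, (1 <= j <= cL (comps c))%N /\ s = cU (comps c) j.

Definition species_cover (S : finType) (n : nat) (comps : 'I_n -> rcomp S) : Prop :=
  forall s : S, exists c : 'I_n,
    s = cY (comps c) \/ (exists i, (i <= cL (comps c))%N /\ s = cS (comps c) i)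
    \/ (exists j, (1 <= j <= cL (comps c))%N /\ s = cU (comps c) j).

Definition H1 (S : finType) (n : nat) (comps : 'I_n -> rcomp S) : Prop :=
  (forall c, (0 < cL (comps c))%N) /\
  (forall c j c' j', (1 <= j <= cL (comps c))%N -> (1 <= j' <= cL (comps c'))%N ->
     cU (comps c) j = cU (comps c') j' -> c = c' /\ j = j') /\
  (forall c j c', (1 <= j <= cL (comps c))%N ->
     cU (comps c) j <> cY (comps c') /\
     (forall i, (i <= cL (comps c'))%N -> cU (comps c) j <> cS (comps c') i)) /\
  (forall c, (forall i, (i <= cL (comps c))%N -> cY (comps c) <> cS (comps c) i) /\
     (forall i i', (i <= cL (comps c))%N -> (i' <= cL (comps c))%N ->
        cS (comps c) i = cS (comps c) i' -> i = i')) /\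
  (forall c c' i i', c <> c' -> (i <= cL (comps c))%N -> (i' <= cL (comps c'))%N ->
     cplxYS (cY (comps c)) (cS (comps c) i) <> cplxYS (cY (comps c')) (cS (comps c') i')).

(* (H2): partition S^(0) |_| ... |_| S^(M) given by a class function cls *)
Definition H2 (S : finType) (n : nat) (comps : 'I_n -> rcomp S) : Prop :=
  exists (M : nat) (cls : S -> nat),
    (2 <= M)%N /\
    (forall s, (cls s <= M)%N) /\
    (forall a, (a <= M)%N -> exists s, cls s = a) /\
    (forall s, cls s = 0%N <-> is_intermediate comps s) /\
    (forall c j, (1 <= j <= cL (comps c))%N ->
       exists a, (1 <= a)%N /\
         (forall i, (i <= cL (comps c))%N -> cls (cS (comps c) i) = a) /\
         cls (cY (comps c)) <> a).

Definition identifiable (R : numDomainType) (S : finType) (n : nat)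
  (comps : 'I_n -> rcomp S) (s : S) (D : nat) (T : Type) (psi : rates R n -> T) : Prop :=
  forall k1 k2 : rates R n,
    positive_rates comps k1 -> positive_rates comps k2 ->
    (forall l, (1 <= l <= D)%N ->
       mpoly_eq (iter_dot (rhs comps k1) l s) (iter_dot (rhs comps k2) l s)) ->
    psi k1 = psi k2.

(* For the second component (V_j = cU c2 (L+1-j)):
   tilde a_j = ka c2 (L+1-j), etc.  psi = (a~_L, b~_L, c~_L, [(a~_j, K~_j) | 1<=j<=L-1]). *)
Definition psi_thm12 (R : nzRingType) (n : nat) (c2 : 'I_n) (L : nat) (k : rates R n)
  : R * R * R * seq (R * R) :=
  let: (ka, kb, kc) := k in
  (ka c2 1%N, kb c2 1%N, kc c2 1%N,
   [seq (ka c2 (L + 1 - j)%N, kb c2 (L + 1 - j)%N + kc c2 (L + 1 - j)%N)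
      | j <- iota 1 (L - 1)]).

(* Main.v *)
Require Import Defs.
From HB Require Import structures.
From mathcomp Require Import all_boot all_order all_algebra.
From mathcomp Require Import zify ring lra.
Import Order.TTheory GRing.Theory Num.Theory.
Local Open Scope ring_scope.
Set Implicit Arguments. Unset Strict Implicit.
Definition wsum (R : nzRingType) (S : finType) (p : mpoly R S) (g : mono S -> R) : R :=
  \sum_(t <- p) t.1 * g t.2.

Definition madd (S : finType) (a b : mono S) : mono S := [ffun z => (a z + b z)%N].
Definition mdec (S : finType) (i : S) (a : mono S) : mono S :=
  [ffun z => if z == i then (a z).-1 else a z].

Lemma mcoefE (R : nzRingType) (S : finType) (p : mpoly R S) m :
  mcoef p m = wsum p (fun mu => (mu == m)%:R).
Proof.
rewrite /mcoef /wsum big_mkcond /=; apply: eq_bigr => t _.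
by case: eqP; rewrite ?mulr1 ?mulr0.
Qed.

Lemma wsum_flatten (R : nzRingType) (S : finType) (ps : seq (mpoly R S)) g :
  wsum (flatten ps) g = \sum_(p <- ps) wsum p g.
Proof. by rewrite /wsum big_flatten. Qed.

Lemma wsum_mmul (R : nzRingType) (S : finType) (p q : mpoly R S) g :
  wsum (mmul p q) g = wsum p (fun mu => wsum q (fun nu => g (madd mu nu))).
Proof.
rewrite /wsum /mmul big_allpairs_dep /=; apply: eq_bigr => t _.
rewrite mulr_sumr; apply: eq_bigr => u _ /=; by rewrite mulrA.
Qed.

Lemma wsum_mderiv (R : nzRingType) (S : finType) i (p : mpoly R S) g :
  wsum (mderiv i p) g = wsum p (fun mu => (mu i)%:R * g (mdec i mu)).
Proof.
rewrite /wsum /mderiv big_map; apply: eq_bigr => t _ /=; by rewrite mulrA.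
Qed.

Lemma wsum_tdot (R : nzRingType) (S : finType) (f : S -> mpoly R S) p g :
  wsum (tdot f p) g = \sum_(i <- enum S)
     wsum p (fun mu => (mu i)%:R * wsum (f i) (fun nu => g (madd (mdec i mu) nu))).
Proof.
rewrite /tdot wsum_flatten big_map; apply: eq_bigr => i _.
by rewrite wsum_mmul wsum_mderiv.
Qed.

Lemma wsum_sum (R : nzRingType) (S : finType) (I : Type) (r : seq I) (p : mpoly R S) F :
  wsum p (fun mu => \sum_(i <- r) F i mu) = \sum_(i <- r) wsum p (F i).
Proof.
rewrite /wsum exchange_big; apply: eq_bigr => t _; by rewrite mulr_sumr.
Qed.

Lemma wsum_ext (R : nzRingType) (S : finType) (p : mpoly R S) g h :
  (forall mu, g mu = h mu) -> wsum p g = wsum p h.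
Proof. by move=> e; apply: eq_bigr => t _; rewrite e. Qed.

Lemma sum_enum_single (R : nzRingType) (S : finType) (x : S) (F : S -> R) :
  (forall i, i != x -> F i = 0) -> \sum_(i <- enum S) F i = F x.
Proof.
move=> H; rewrite (bigD1_seq x) ?mem_enum ?enum_uniq //= big1 ?addr0 //.
Qed.

Lemma madd_dec_mvar (S : finType) (s : S) nu :
  madd (mdec s [ffun z => nat_of_bool (z == s)]) nu = nu.
Proof.
by apply/ffunP => z; rewrite !ffunE; case: (z =P s) => [->|]; rewrite ?eqxx.
Qed.

Lemma wsum_dot1 (R : nzRingType) (S : finType) (f : S -> mpoly R S) s g :
  wsum (tdot f (mvar R s)) g = wsum (f s) g.
Proof.
rewrite wsum_tdot (sum_enum_single (x:=s)).
  rewrite /wsum big_cons big_nil /= ffunE eqxx mul1r mul1r addr0.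
  by apply: eq_bigr => t _; rewrite madd_dec_mvar.
move=> i /negbTE ni; rewrite /wsum big_cons big_nil /= ffunE.
by rewrite ni mul0r mulr0 addr0.
Qed.

Definition Gm (R : nzRingType) (S : finType) (f : S -> mpoly R S) (m mu : mono S) : R :=
  \sum_(i <- enum S) (mu i)%:R * wsum (f i) (fun nu => (madd (mdec i mu) nu == m)%:R).

Lemma coef1 (R : nzRingType) (S : finType) (f : S -> mpoly R S) s m :
  mcoef (iter_dot f 1 s) m = mcoef (f s) m.
Proof. by rewrite !mcoefE /iter_dot /= wsum_dot1. Qed.

Lemma coef2 (R : nzRingType) (S : finType) (f : S -> mpoly R S) s m :
  mcoef (iter_dot f 2 s) m = wsum (f s) (Gm f m).
Proof.
rewrite mcoefE /iter_dot /= wsum_tdot.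
under eq_bigr => i _ do rewrite wsum_dot1.
by rewrite -wsum_sum.
Qed.
Lemma wsum_mass (R : nzRingType) (S : finType) rx (x : S) (g : mono S -> R) :
  wsum (mass_action rx x) g =
  \sum_(r <- rx) r.1.1 * ((r.2 x)%:R - (r.1.2 x)%:R) * g r.1.2.
Proof. by rewrite /wsum big_map. Qed.

Lemma wsum_rhs (R : nzRingType) (S : finType) n (comps : 'I_n -> rcomp S) (ka kb kc : 'I_n -> nat -> R) x g :
  wsum (rhs comps (ka, kb, kc) x) g =
  \sum_(c <- enum 'I_n) \sum_(j <- iota 1 (cL (comps c)))
   (ka c j * ((cplx1 (cU (comps c) j) x)%:R - (cplxYS (cY (comps c)) (cS (comps c) j.-1) x)%:R)
        * g (cplxYS (cY (comps c)) (cS (comps c) j.-1))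
  + kb c j * ((cplxYS (cY (comps c)) (cS (comps c) j.-1) x)%:R - (cplx1 (cU (comps c) j) x)%:R)
        * g (cplx1 (cU (comps c) j))
  + kc c j * ((cplxYS (cY (comps c)) (cS (comps c) j) x)%:R - (cplx1 (cU (comps c) j) x)%:R)
        * g (cplx1 (cU (comps c) j))).
Proof.
rewrite /rhs wsum_mass /network_reactions big_flatten big_map /=.
apply: eq_bigr => c _; rewrite big_flatten big_map; apply: eq_bigr => j _.
by rewrite !big_cons big_nil /= addr0 addrA.
Qed.

Lemma sum_single2 (R : nzRingType) n (L : 'I_n -> nat) (F : 'I_n -> nat -> R) c0 j0 :
  (1 <= j0 <= L c0)%N ->
  (forall c j, (1 <= j <= L c)%N -> (c != c0) || (j != j0) -> F c j = 0) ->
  \sum_(c <- enum 'I_n) \sum_(j <- iota 1 (L c)) F c j = F c0 j0.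
Proof.
move=> hj H; rewrite (sum_enum_single (x:=c0)).
  rewrite (bigD1_seq j0) ?iota_uniq //=; last first.
    by rewrite mem_iota; case/andP: hj => h1 h2; apply/andP; split; lia.
  rewrite big1_seq ?addr0 // => j /andP[nj]; rewrite mem_iota => /andP[h1 h2].
  apply: H; last by rewrite nj orbT.
  apply/andP; split; lia.
move=> c nc; rewrite big1_seq // => j; rewrite mem_iota => /andP[h1 h2].
apply: H; last by rewrite nc.
apply/andP; split; lia.
Qed.

Lemma sum_zero2 (R : nzRingType) n (L : 'I_n -> nat) (F : 'I_n -> nat -> R) :
  (forall c j, (1 <= j <= L c)%N -> F c j = 0) ->
  \sum_(c <- enum 'I_n) \sum_(j <- iota 1 (L c)) F c j = 0.
Proof.
move=> H; rewrite big1_seq // => c _; rewrite big1_seq // => j.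
rewrite mem_iota => /andP[h1 h2]; apply: H.
apply/andP; split; lia.
Qed.

Definition mdeg (S : finType) (m : mono S) : nat := (\sum_(z : S) m z)%N.

Lemma sum_eq1 (S : finType) (u : S) : (\sum_(z : S) nat_of_bool (z == u))%N = 1%N.
Proof.
rewrite (bigD1 u) //= eqxx big1 ?addn0 // => z /negbTE ->; done.
Qed.

Lemma mdeg1 (S : finType) (u : S) : mdeg (cplx1 u) = 1%N.
Proof. rewrite /mdeg; under eq_bigr => z _ do rewrite ffunE; exact: sum_eq1. Qed.

Lemma mdegYS (S : finType) (a b : S) : mdeg (cplxYS a b) = 2%N.
Proof.
rewrite /mdeg; under eq_bigr => z _ do rewrite ffunE.
by rewrite big_split /= !sum_eq1.
Qed.

Lemma mdeg_add (S : finType) (a b : mono S) : mdeg (madd a b) = (mdeg a + mdeg b)%N.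
Proof.
rewrite /mdeg; under eq_bigr => z _ do rewrite ffunE.
by rewrite big_split.
Qed.

Lemma YS_neq1 (S : finType) (a b u : S) : cplxYS a b <> cplx1 u.
Proof. by move=> e; have := mdegYS a b; rewrite e mdeg1. Qed.

Lemma cplx1_inj (S : finType) (u u' : S) : cplx1 u = cplx1 u' -> u = u'.
Proof.
move=> /ffunP /(_ u); rewrite !ffunE eqxx.
by case: (u =P u').
Qed.

Lemma cplxYS_eq (S : finType) (a b a' b' : S) : a != b ->
  cplxYS a b = cplxYS a' b' -> (a = a' /\ b = b') \/ (a = b' /\ b = a').
Proof.
move=> nab /ffunP e.
have ea := e a; have eb := e b; rewrite !ffunE !eqxx in ea eb.
rewrite (negbTE nab) in ea; rewrite eq_sym (negbTE nab) in eb.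
move: ea eb.
case: (a =P a') => h1; case: (a =P b') => h2; case: (b =P a') => h3;
case: (b =P b') => h4 /= ea eb; try discriminate.
all: try (by left); try (by right).
all: exfalso; move/eqP: nab; apply; congruence.
Qed.

Definition Qf (R : nzRingType) (S : finType) (f : S -> mpoly R S) (a b : S) (m : mono S) : R :=
  wsum (f a) (fun nu => (madd (cplx1 b) nu == m)%:R).

Lemma Gm_cplx1 (R : nzRingType) (S : finType) (f : S -> mpoly R S) m u :
  Gm f m (cplx1 u) = mcoef (f u) m.
Proof.
rewrite /Gm (sum_enum_single (x:=u)).
  by rewrite /cplx1 ffunE eqxx mul1r mcoefE; apply: wsum_ext => nu; rewrite madd_dec_mvar.
by move=> i /negbTE ni; rewrite /cplx1 ffunE ni mul0r.
Qed.

Lemma mdecYS1 (S : finType) (a b : S) : a != b -> mdec a (cplxYS a b) = cplx1 b.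
Proof.
move=> nab; apply/ffunP => z; rewrite !ffunE.
case: (z =P a) => [->|_]; first by rewrite (negbTE nab).
by [].
Qed.

Lemma mdecYS2 (S : finType) (a b : S) : a != b -> mdec b (cplxYS a b) = cplx1 a.
Proof.
move=> nab; apply/ffunP => z; rewrite !ffunE.
case: (z =P b) => [->|_]; first by rewrite eq_sym (negbTE nab).
by rewrite addn0.
Qed.

Lemma Gm_cplxYS (R : nzRingType) (S : finType) (f : S -> mpoly R S) m (a b : S) :
  a != b -> Gm f m (cplxYS a b) = Qf f a b m + Qf f b a m.
Proof.
move=> nab; rewrite /Gm; under eq_bigr => i _ do rewrite ffunE natrD mulrDl.
rewrite big_split /=; congr (_ + _).
  rewrite (sum_enum_single (x:=a)); first by rewrite eqxx mul1r mdecYS1.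
  by move=> i /negbTE ni; rewrite ni mul0r.
rewrite (sum_enum_single (x:=b)); first by rewrite eqxx mul1r mdecYS2.
by move=> i /negbTE ni; rewrite ni mul0r.
Qed.

Lemma madd_inj (S : finType) (a nu m : mono S) : (madd a nu == madd a m) = (nu == m).
Proof.
apply/eqP/eqP => [/ffunP e|->//]; apply/ffunP => z.
by have := e z; rewrite !ffunE => /addnI.
Qed.

Lemma Q_shift (R : nzRingType) (S : finType) (f : S -> mpoly R S) a b m :
  Qf f a b (madd (cplx1 b) m) = mcoef (f a) m.
Proof. by rewrite /Qf mcoefE; apply: wsum_ext => nu; rewrite madd_inj. Qed.

Lemma Q_zero (R : nzRingType) (S : finType) (f : S -> mpoly R S) a b (m : mono S) :
  m b = 0%N -> Qf f a b m = 0.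
Proof.
move=> mb; rewrite /Qf /wsum big1 // => t _.
case: eqP => [/ffunP e|]; last by rewrite mulr0.
by have := e b; rewrite mb !ffunE eqxx.
Qed.
Lemma YS_add (S : finType) (a b : S) : cplxYS a b = madd (cplx1 a) (cplx1 b).
Proof. by apply/ffunP => z; rewrite !ffunE. Qed.

Lemma YS_C (S : finType) (a b : S) : cplxYS a b = cplxYS b a.
Proof. by apply/ffunP => z; rewrite !ffunE addnC. Qed.

Lemma YS_neq1b (S : finType) (a b u : S) : (cplxYS a b == cplx1 u) = false.
Proof. by apply/eqP/YS_neq1. Qed.

Lemma one_neqYSb (S : finType) (a b u : S) : (cplx1 u == cplxYS a b) = false.
Proof. by rewrite eq_sym YS_neq1b. Qed.

Lemma natrT (R : nzRingType) : (nat_of_bool true)%:R = 1 :> R. Proof. by []. Qed.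
Lemma natrF (R : nzRingType) : (nat_of_bool false)%:R = 0 :> R. Proof. by []. Qed.

Section Net.
Variables (R : realFieldType) (S : finType) (n : nat) (comps : 'I_n -> rcomp S).
Variables (c1 c2 : 'I_n) (ka kb kc : 'I_n -> nat -> R) (cls : S -> nat).
Local Notation L c := (cL (comps c)).
Local Notation Y c := (cY (comps c)).
Local Notation Sb c i := (cS (comps c) i).
Local Notation U c j := (cU (comps c) j).
Local Notation f := (rhs comps (ka, kb, kc)).

Hypothesis hL : forall c, (0 < L c)%N.
Hypothesis hUinj : forall c j c' j', (1 <= j <= L c)%N -> (1 <= j' <= L c')%N ->
  U c j = U c' j' -> c = c' /\ j = j'.
Hypothesis hUY : forall c j c', (1 <= j <= L c)%N -> U c j <> Y c'.
Hypothesis hUS : forall c j c' i, (1 <= j <= L c)%N -> (i <= L c')%N -> U c j <> Sb c' i.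
Hypothesis hYS : forall c i, (i <= L c)%N -> Y c <> Sb c i.
Hypothesis hSinj : forall c i i', (i <= L c)%N -> (i' <= L c)%N -> Sb c i = Sb c i' -> i = i'.
Hypothesis hcomp : forall c i c' i', (i <= L c)%N -> (i' <= L c')%N ->
  cplxYS (Y c) (Sb c i) = cplxYS (Y c') (Sb c' i') -> c = c' /\ i = i'.
Hypothesis hclsS : forall c i i', (i <= L c)%N -> (i' <= L c)%N -> cls (Sb c i) = cls (Sb c i').
Hypothesis hclsY : forall c i, (i <= L c)%N -> cls (Y c) <> cls (Sb c i).
Hypothesis hL2 : L c2 = L c1.
Hypothesis hS2 : forall i, (i <= L c1)%N -> Sb c2 i = Sb c1 (L c1 - i).

Lemma F_int x c0 j0 : (1 <= j0 <= L c0)%N ->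
  mcoef (f x) (cplx1 (U c0 j0)) =
    kb c0 j0 * ((cplxYS (Y c0) (Sb c0 j0.-1) x)%:R - (cplx1 (U c0 j0) x)%:R)
  + kc c0 j0 * ((cplxYS (Y c0) (Sb c0 j0) x)%:R - (cplx1 (U c0 j0) x)%:R).
Proof.
move=> hj; rewrite mcoefE wsum_rhs (sum_single2 (c0:=c0) (j0:=j0)) //.
  by rewrite YS_neq1b eqxx mulr0 mulr1 mulr1 add0r.
move=> c j hj' hne; rewrite YS_neq1b mulr0 add0r.
case: eqP => [/cplx1_inj /(hUinj hj' hj) [e1 e2]|_]; last by rewrite !mulr0 addr0.
by move: hne; rewrite e1 e2 !eqxx.
Qed.

Lemma F_cplx x c0 j0 : (1 <= j0 <= L c0)%N ->
  mcoef (f x) (cplxYS (Y c0) (Sb c0 j0.-1)) =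
    ka c0 j0 * ((cplx1 (U c0 j0) x)%:R - (cplxYS (Y c0) (Sb c0 j0.-1) x)%:R).
Proof.
move=> hj; rewrite mcoefE wsum_rhs (sum_single2 (c0:=c0) (j0:=j0)) //.
  by rewrite one_neqYSb eqxx !mulr0 mulr1 !addr0.
move=> c j hj' hne; rewrite one_neqYSb !mulr0 !addr0.
case: eqP => [e|_]; last by rewrite mulr0.
have [e1 e2] : c = c0 /\ j.-1 = j0.-1.
  by apply: hcomp e; [case/andP: hj' => h1 h2; lia | case/andP: hj => h1 h2; lia].
move: hne; rewrite e1 (_ : j = j0) ?eqxx //.
by move: hj hj'; rewrite e1; lia.
Qed.

Lemma F_none x m :
  (forall c j, (1 <= j <= L c)%N -> m <> cplx1 (U c j) /\ m <> cplxYS (Y c) (Sb c j.-1)) ->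
  mcoef (f x) m = 0.
Proof.
move=> H; rewrite mcoefE wsum_rhs sum_zero2 // => c j hj.
have [h1 h2] := H c j hj.
have e1 : (cplx1 (U c j) == m) = false by apply/eqP => e; apply: h1.
have e2 : (cplxYS (Y c) (Sb c j.-1) == m) = false by apply/eqP => e; apply: h2.
by rewrite e1 e2 !mulr0 !addr0.
Qed.


Local Notation s := (Sb c1 (L c1)).
Local Notation yt := (Y c2).
Local Notation v := (U c2 1).

Lemma hL1 : (1 <= L c1)%N. Proof. exact: hL. Qed.
Lemma v_valid : (1 <= 1 <= L c2)%N. Proof. by rewrite /= hL. Qed.

Lemma s_eq : Sb c2 0 = s.
Proof. by rewrite hS2 // subn0. Qed.

Lemma yt_s : yt <> s.
Proof. rewrite -s_eq; exact: hYS. Qed.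

Lemma yt_notS1 i : (i <= L c1)%N -> yt <> Sb c1 i.
Proof.
move=> hi; have := hS2 (leq_subr i (L c1)); rewrite subKn // => <-.
by apply: hYS; rewrite hL2 leq_subr.
Qed.

Lemma cls_c1 i : (i <= L c1)%N -> cls (Sb c1 i) = cls s.
Proof. by move=> hi; apply: hclsS. Qed.

Lemma notc2 c j : (1 <= j <= L c)%N -> (c != c2) || (j != 1%N) ->
  cplxYS (Y c) (Sb c j.-1) <> cplxYS yt s.
Proof.
move=> hj hne e; rewrite -s_eq in e.
have [e1 e2] : c = c2 /\ j.-1 = 0%N by apply: hcomp e => //; case/andP: hj => h1 h2; lia.
by move: hne; rewrite e1 eqxx (_ : j = 1%N) //; case/andP: hj => h1 h2; lia.
Qed.

Lemma clsY_s c i i' : (i <= L c)%N -> (i' <= L c1)%N -> Y c = s -> Sb c i <> Sb c1 i'.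
Proof.
move=> hi hi' e1 e2; apply: (hclsY hi); rewrite e1 e2 cls_c1 //.
Qed.

Lemma clsS_s c i i' : (i <= L c)%N -> (i' <= L c1)%N -> Sb c i = s -> Y c <> Sb c1 i'.
Proof.
move=> hi hi' e1 e2; apply: (hclsY hi); rewrite e1 e2 cls_c1 //.
Qed.

Lemma U_s c j : (1 <= j <= L c)%N -> (cplx1 (U c j) s) = 0%N.
Proof.
move=> hj; rewrite ffunE; case: eqP => // e.
by exfalso; apply: (hUS hj (leqnn (L c1))); rewrite e.
Qed.

Lemma coefA : mcoef (f s) (cplx1 v) = kb c2 1.
Proof.
rewrite F_int ?v_valid // U_s ?v_valid // /= s_eq !ffunE eqxx.
have -> : (s == yt) = false by apply/eqP => e; apply: yt_s.
have -> : (s == Sb c2 1) = false.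
  apply/eqP; rewrite hS2 ?hL1 // => /hSinj; have := hL1; lia.
by rewrite !subr0 add0n addn0 mulr1 mulr0 addr0.
Qed.

Lemma coefB : mcoef (f s) (cplxYS yt s) = - ka c2 1.
Proof.
rewrite -{1 2}s_eq (F_cplx _ (c0:=c2) (j0:=1)) ?v_valid // s_eq U_s ?v_valid // !ffunE eqxx.
have -> : (s == yt) = false by apply/eqP => e; apply: yt_s.
by rewrite /= sub0r mulrN1.
Qed.


Lemma GmYS_v c i : (i <= L c)%N -> Gm f (cplx1 v) (cplxYS (Y c) (Sb c i)) = 0.
Proof.
move=> hi; rewrite Gm_cplxYS; last by apply/eqP; apply: hYS.
rewrite !Q_zero ?addr0 //; rewrite ffunE; case: eqP => // e; exfalso.
  by apply: (hUY v_valid (c' := c)).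
by apply: (hUS v_valid hi).
Qed.

Lemma int_at_v c j : (1 <= j <= L c)%N ->
  mcoef (f (U c j)) (cplx1 v) = - (kb c2 1 + kc c2 1) * (U c j == v)%:R.
Proof.
move=> hj; rewrite F_int ?v_valid // !ffunE.
have -> : (U c j == Y c2) = false by apply/eqP; apply: hUY.
have -> : (U c j == Sb c2 0) = false by apply/eqP; apply: hUS.
have -> : (U c j == Sb c2 1) = false by apply/eqP; apply: (hUS hj); rewrite hL2 hL1.
rewrite /= !add0n; ring.
Qed.

Lemma coefC : mcoef (iter_dot f 2 s) (cplx1 v) = - kb c2 1 * (kb c2 1 + kc c2 1).
Proof.
rewrite coef2 wsum_rhs (sum_single2 (c0:=c2) (j0:=1)) ?v_valid //.
  rewrite GmYS_v // !Gm_cplx1 int_at_v ?v_valid // eqxx U_s ?v_valid // /= s_eq !ffunE eqxx.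
  have -> : (s == yt) = false by apply/eqP => e; apply: yt_s.
  have -> : (s == Sb c2 1) = false.
    apply/eqP; rewrite hS2 ?hL1 // => /hSinj; have := hL1; lia.
  rewrite !subr0 add0n addn0 ?natrT ?natrF; ring.
move=> c j hj hne; rewrite GmYS_v; last by case/andP: hj => h1 h2; lia.
rewrite !Gm_cplx1 int_at_v //.
have -> : (U c j == v) = false.
  apply/eqP => /(hUinj hj v_valid) [e1 e2]; by move: hne; rewrite e1 e2 !eqxx.
by rewrite ?natrF !mulr0 !addr0 ?mulr0.
Qed.


Section Jp.
Variable jp : nat.
Hypothesis hjp : (2 <= jp <= L c1)%N.
Local Notation w := (U c2 jp).
Local Notation z := (Sb c2 jp.-1).
Local Notation z' := (Sb c2 jp).

Lemma w_valid : (1 <= jp <= L c2)%N.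
Proof. by rewrite hL2; case/andP: hjp => h1 h2; apply/andP; split; lia. Qed.

Lemma z_c1 : z = Sb c1 (L c1 - jp.-1).
Proof. by rewrite hS2 //; case/andP: hjp => h1 h2; lia. Qed.
Lemma z'_c1 : z' = Sb c1 (L c1 - jp).
Proof. by rewrite hS2 //; case/andP: hjp => h1 h2; lia. Qed.
Lemma zle : (L c1 - jp.-1 <= L c1)%N. Proof. exact: leq_subr. Qed.
Lemma z'le : (L c1 - jp <= L c1)%N. Proof. exact: leq_subr. Qed.

Lemma z_s : z <> s.
Proof. rewrite z_c1 => /hSinj; case/andP: hjp => h1 h2; have := hL1; lia. Qed.

Lemma yt_z : yt <> z.
Proof. by apply: hYS; rewrite hL2; case/andP: hjp => h1 h2; lia. Qed.
Lemma yt_z' : yt <> z'.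
Proof. by apply: hYS; rewrite hL2; case/andP: hjp => h1 h2; lia. Qed.

Lemma s_w : s <> w.
Proof. by move=> e; apply: (hUS w_valid (leqnn (L c1))). Qed.

Definition mD := cplxYS s w.

Lemma mD_none a : mcoef (f a) mD = 0.
Proof.
apply: F_none => c j hj; split; first exact: YS_neq1.
have hi : (j.-1 <= L c)%N by case/andP: hj => h1 h2; lia.
move=> /cplxYS_eq []; first by apply/eqP; exact: s_w.
  by case=> _ e; apply: (hUS w_valid hi).
by case=> _ e; apply: (hUY w_valid (c' := c)).
Qed.

Lemma QD_s a : Qf f a s mD = mcoef (f a) (cplx1 w).
Proof. by rewrite /mD YS_add Q_shift. Qed.

Lemma QD_0 a b : b <> s -> b <> w -> Qf f a b mD = 0.
Proof.
move=> h1 h2; apply: Q_zero; rewrite ffunE.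
have -> : (b == s) = false by apply/eqP.
by have -> : (b == w) = false by apply/eqP.
Qed.

Lemma int_w_zero a : a <> yt -> a <> z -> a <> z' -> a <> w -> mcoef (f a) (cplx1 w) = 0.
Proof.
move=> h1 h2 h3 h4; rewrite F_int ?w_valid // !ffunE.
by do !(case: eqP => // _); rewrite /= ?natrF ?subrr ?mulr0 ?addr0.
Qed.

Lemma int_w_yt : mcoef (f yt) (cplx1 w) = kb c2 jp + kc c2 jp.
Proof.
rewrite F_int ?w_valid // !ffunE eqxx.
have -> : (yt == z) = false by apply/eqP; exact: yt_z.
have -> : (yt == z') = false by apply/eqP; exact: yt_z'.
have -> : (yt == w) = false by apply/eqP => e; apply: (hUY w_valid (c' := c2)); rewrite e.
by rewrite /= !natrT natrF !subr0 !mulr1.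
Qed.

Lemma coefD : mcoef (iter_dot f 2 s) mD = - ka c2 1 * (kb c2 jp + kc c2 jp).
Proof.
rewrite coef2 wsum_rhs (sum_single2 (c0:=c2) (j0:=1)) ?v_valid //.
  rewrite !Gm_cplx1 !mD_none !mulr0 !addr0 /= s_eq Gm_cplxYS; last by apply/eqP; exact: yt_s.
  rewrite QD_s int_w_yt (QD_0 s) ?addr0; last 2 first.
  - exact: yt_s.
  - by move=> e; apply: (hUY w_valid (c' := c2)); rewrite e.
  rewrite U_s ?v_valid // ffunE eqxx.
  have -> : (s == yt) = false by apply/eqP => e; apply: yt_s.
  by rewrite add0n natrT sub0r mulrN1 mulNr.
move=> c j hj hne; rewrite !Gm_cplx1 !mD_none !mulr0 !addr0.
have hi : (j.-1 <= L c)%N by case/andP: hj => h1 h2; lia.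
rewrite Gm_cplxYS; last by apply/eqP; apply: hYS.
have nc := notc2 hj hne.
case: (Y c =P s) => [eY|nY].
  rewrite (QD_0 (Y c)); last 2 first.
  - by move=> e; apply: (hYS hi); rewrite eY e.
  - by move=> e; apply: (hUS w_valid hi); rewrite e.
  rewrite eY QD_s int_w_zero ?addr0 ?mulr0 //.
  - by move=> e; apply: nc; rewrite eY e YS_C.
  - by rewrite z_c1; apply: (clsY_s hi zle).
  - by rewrite z'_c1; apply: (clsY_s hi z'le).
  - by move=> e; apply: (hUS w_valid hi); rewrite e.
case: (Sb c j.-1 =P s) => [eX|nX].
  rewrite (@QD_0 (Sb c j.-1) (Y c)) // ?addr0; last first.
    by move=> e; apply: (hUY w_valid (c' := c)); rewrite e.
  rewrite eX QD_s int_w_zero ?mulr0 //.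
  - by move=> e; apply: nc; rewrite eX e.
  - by rewrite z_c1; apply: (clsS_s hi zle).
  - by rewrite z'_c1; apply: (clsS_s hi z'le).
  - by move=> e; apply: (hUY w_valid (c' := c)); rewrite e.
rewrite U_s // ffunE.
have -> : (s == Y c) = false by apply/eqP => e; apply: nY.
have -> : (s == Sb c j.-1) = false by apply/eqP => e; apply: nX.
by rewrite /= subrr mulr0 mul0r.
Qed.


Definition mE := madd (cplx1 yt) (cplxYS s z).

Lemma mE_deg : mdeg mE = 3%N.
Proof. by rewrite /mE mdeg_add mdeg1 mdegYS. Qed.

Lemma mE_none a : mcoef (f a) mE = 0.
Proof.
apply: F_none => c j hj; split.
  by move=> e; have := mE_deg; rewrite e mdeg1.
by move=> e; have := mE_deg; rewrite e mdegYS.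
Qed.

Lemma mE_s : mE = madd (cplx1 s) (cplxYS yt z).
Proof. by apply/ffunP => x; rewrite !ffunE; lia. Qed.

Lemma QE_yt a : Qf f a yt mE = mcoef (f a) (cplxYS s z).
Proof. by rewrite /mE Q_shift. Qed.
Lemma QE_s a : Qf f a s mE = mcoef (f a) (cplxYS yt z).
Proof. by rewrite mE_s Q_shift. Qed.

Lemma QE_0 a b : b <> yt -> b <> s -> b <> z -> Qf f a b mE = 0.
Proof.
move=> h1 h2 h3; apply: Q_zero; rewrite !ffunE.
have -> : (b == yt) = false by apply/eqP.
have -> : (b == s) = false by apply/eqP.
by have -> : (b == z) = false by apply/eqP.
Qed.

Lemma sz_none a : mcoef (f a) (cplxYS s z) = 0.
Proof.
apply: F_none => c j hj; split; first exact: YS_neq1.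
have hi : (j.-1 <= L c)%N by case/andP: hj => h1 h2; lia.
move=> /cplxYS_eq []; first by apply/eqP => e; apply: z_s.
  case=> e1 e2; apply: (clsY_s hi zle (esym e1)); by rewrite -e2 z_c1.
case=> e1 e2; apply: (clsS_s hi zle (esym e1)); by rewrite -e2 z_c1.
Qed.

Lemma ytz_coef a : mcoef (f a) (cplxYS yt z) =
  ka c2 jp * ((cplx1 w a)%:R - (cplxYS yt z a)%:R).
Proof. by rewrite (F_cplx _ (c0 := c2) (j0 := jp)) ?w_valid. Qed.

Lemma ytz_zero a : a <> w -> a <> yt -> a <> z -> mcoef (f a) (cplxYS yt z) = 0.
Proof.
move=> h1 h2 h3; rewrite ytz_coef !ffunE.
have -> : (a == w) = false by apply/eqP.
have -> : (a == yt) = false by apply/eqP.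
have -> : (a == z) = false by apply/eqP.
by rewrite /= ?natrF subrr mulr0.
Qed.

Lemma coefE : mcoef (iter_dot f 2 s) mE = ka c2 1 * ka c2 jp.
Proof.
rewrite coef2 wsum_rhs (sum_single2 (c0:=c2) (j0:=1)) ?v_valid //.
  rewrite !Gm_cplx1 !mE_none !mulr0 !addr0 /= s_eq Gm_cplxYS; last by apply/eqP; exact: yt_s.
  rewrite QE_s QE_yt sz_none addr0 ytz_coef !ffunE !eqxx.
  have -> : (yt == w) = false by apply/eqP => e; apply: (hUY w_valid (c' := c2)); rewrite e.
  have -> : (yt == z) = false by apply/eqP; exact: yt_z.
  have -> : (s == yt) = false by apply/eqP => e; apply: yt_s.
  have -> : (s == v) = false by apply/eqP => e; apply: (hUS v_valid (leqnn (L c1))); rewrite e.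
  rewrite /= ?natrT ?natrF ?add0n ?addn0 ?natrT ?natrF; ring.
move=> c j hj hne; rewrite !Gm_cplx1 !mE_none !mulr0 !addr0.
have hi : (j.-1 <= L c)%N by case/andP: hj => h1 h2; lia.
rewrite Gm_cplxYS; last by apply/eqP; apply: hYS.
have nc := notc2 hj hne.
case: (Y c =P s) => [eY|nY].
  rewrite (QE_0 (Y c)); last 3 first.
  - by move=> e; apply: nc; rewrite eY e YS_C.
  - by move=> e; apply: (hYS hi); rewrite eY e.
  - by rewrite z_c1; apply: (clsY_s hi zle).
  rewrite eY QE_s ytz_zero ?addr0 ?mulr0 //.
  - by move=> e; apply: (hUS w_valid hi); rewrite e.
  - by move=> e; apply: nc; rewrite eY e YS_C.
  - by rewrite z_c1; apply: (clsY_s hi zle).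
case: (Sb c j.-1 =P s) => [eX|nX].
  rewrite (@QE_0 (Sb c j.-1) (Y c)) // ?addr0; last first.
  - by rewrite z_c1; apply: (clsS_s hi zle).
  - by move=> e; apply: nc; rewrite eX e.
  rewrite eX QE_s ytz_zero ?mulr0 //.
  - by move=> e; apply: (hUY w_valid (c' := c)); rewrite e.
  - by move=> e; apply: nc; rewrite eX e.
  - by rewrite z_c1; apply: (clsS_s hi zle).
rewrite U_s // ffunE.
have -> : (s == Y c) = false by apply/eqP => e; apply: nY.
have -> : (s == Sb c j.-1) = false by apply/eqP => e; apply: nX.
by rewrite /= subrr mulr0 mul0r.
Qed.

End Jp.

End Net.

Unset Implicit Arguments.

Theorem mainTheorem12 (R : realFieldType) (S : finType) (n : nat)
  (comps : 'I_n -> rcomp S) (c1 c2 : 'I_n) :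
  H1 comps -> H2 comps -> species_cover comps ->
  c1 != c2 ->
  (1 <= cL (comps c1))%N ->
  cL (comps c2) = cL (comps c1) ->
  (forall i, (i <= cL (comps c1))%N -> cS (comps c2) i = cS (comps c1) (cL (comps c1) - i)) ->
  identifiable (R := R) comps (cS (comps c1) (cL (comps c1))) 2
    (psi_thm12 c2 (cL (comps c1))).
Proof.
move=> HH1 HH2 _ _ hL1 hL2 hS2 [[ka1 kb1] kc1] [[ka2 kb2] kc2] pos1 pos2 heq.
case: HH1 => hL [hUinj [hUYS [hYSd hcompd]]].
have hUY : forall c j c', (1 <= j <= cL (comps c))%N -> cU (comps c) j <> cY (comps c').
  by move=> c j c' hj; case: (hUYS c j c' hj).
have hUS : forall c j c' i, (1 <= j <= cL (comps c))%N -> (i <= cL (comps c'))%N ->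
    cU (comps c) j <> cS (comps c') i.
  by move=> c j c' i hj hi; case: (hUYS c j c' hj) => _; apply.
have hYS : forall c i, (i <= cL (comps c))%N -> cY (comps c) <> cS (comps c) i.
  by move=> c i hi; case: (hYSd c) => h _; apply: h.
have hSinj : forall c i i', (i <= cL (comps c))%N -> (i' <= cL (comps c))%N ->
    cS (comps c) i = cS (comps c) i' -> i = i'.
  by move=> c i i' hi hi'; case: (hYSd c) => _ h; apply: h.
have hcomp : forall c i c' i', (i <= cL (comps c))%N -> (i' <= cL (comps c'))%N ->
    cplxYS (cY (comps c)) (cS (comps c) i) = cplxYS (cY (comps c')) (cS (comps c') i') ->
    c = c' /\ i = i'.
  move=> c i c' i' hi hi' e; case: (eqVneq c c') => [ec|nc]; last first.
    by exfalso; apply: (hcompd c c' i i' _ hi hi' e); apply/eqP.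
  subst c'; split => //; move: e => /cplxYS_eq [].
  - by apply/eqP; apply: hYS.
  - by case=> _ /hSinj; apply.
  - by case=> e _; exfalso; apply: (hYS _ _ hi').
case: HH2 => M [cls [_ [_ [_ [_ hcl]]]]].
have vc : forall c, (1 <= 1 <= cL (comps c))%N by move=> c; rewrite /= hL.
have hclsS : forall c i i', (i <= cL (comps c))%N -> (i' <= cL (comps c))%N ->
    cls (cS (comps c) i) = cls (cS (comps c) i').
  by move=> c i i' hi hi'; have [a [_ [ha _]]] := hcl c 1%N (vc c); rewrite !ha.
have hclsY : forall c i, (i <= cL (comps c))%N -> cls (cY (comps c)) <> cls (cS (comps c) i).
  by move=> c i hi; have [a [_ [ha hy]]] := hcl c 1%N (vc c); rewrite ha.
have e1 := heq 1%N isT; have e2 := heq 2%N isT.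
have [pa1 [pb1 pc1]] := pos1 c2 1%N (vc c2).
have [pa2 [pb2 pc2]] := pos2 c2 1%N (vc c2).
have eb : kb1 c2 1%N = kb2 c2 1%N.
  have := e1 (cplx1 (cU (comps c2) 1)); rewrite !coef1.
  by rewrite (coefA ka1 kb1 kc1 hL hUinj hUS hYS hSinj hL2 hS2)
             (coefA ka2 kb2 kc2 hL hUinj hUS hYS hSinj hL2 hS2).
have ea : ka1 c2 1%N = ka2 c2 1%N.
  have := e1 (cplxYS (cY (comps c2)) (cS (comps c1) (cL (comps c1)))); rewrite !coef1.
  rewrite (coefB ka1 kb1 kc1 hL hUS hYS hcomp hL2 hS2)
             (coefB ka2 kb2 kc2 hL hUS hYS hcomp hL2 hS2).
  exact: oppr_inj.
have ec : kc1 c2 1%N = kc2 c2 1%N.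
  have := e2 (cplx1 (cU (comps c2) 1)).
  rewrite (coefC ka1 kb1 kc1 hL hUinj hUY hUS hYS hSinj hL2 hS2)
          (coefC ka2 kb2 kc2 hL hUinj hUY hUS hYS hSinj hL2 hS2) -eb.
  move/(mulfI _); rewrite oppr_eq0 => /(_ (lt0r_neq0 pb1)) /addrI; done.
rewrite /psi_thm12 /=; congr (_, _, _, _) => //.
apply/eq_in_map => j; rewrite mem_iota => hj.
have hjp : (2 <= cL (comps c1) + 1 - j <= cL (comps c1))%N.
  by move: hj; have := hL1; lia.
have eK : kb1 c2 (cL (comps c1) + 1 - j)%N + kc1 c2 (cL (comps c1) + 1 - j)%N =
          kb2 c2 (cL (comps c1) + 1 - j)%N + kc2 c2 (cL (comps c1) + 1 - j)%N.
  have := e2 (mD comps c1 c2 (cL (comps c1) + 1 - j)).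
  rewrite (coefD ka1 kb1 kc1 hL hUinj hUY hUS hYS hcomp hclsS hclsY hL2 hS2 hjp)
          (coefD ka2 kb2 kc2 hL hUinj hUY hUS hYS hcomp hclsS hclsY hL2 hS2 hjp) -ea.
  by move/(mulfI _); rewrite oppr_eq0 => /(_ (lt0r_neq0 pa1)).
have eA : ka1 c2 (cL (comps c1) + 1 - j)%N = ka2 c2 (cL (comps c1) + 1 - j)%N.
  have := e2 (mE comps c1 c2 (cL (comps c1) + 1 - j)).
  rewrite (coefE ka1 kb1 kc1 hL hUY hUS hYS hSinj hcomp hclsS hclsY hL2 hS2 hjp)
          (coefE ka2 kb2 kc2 hL hUY hUS hYS hSinj hcomp hclsS hclsY hL2 hS2 hjp) -ea.
  by move/(mulfI _) => /(_ (lt0r_neq0 pa1)).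
by rewrite eA eK.
Qed.
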